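(* Let $P\subset\mathbb{R}^d$ be a finite set, let $r$ be the radius of the minimum enclosing ball of $P$, and let $M$ be a maximum-weight matching of $P$ (i.e. a matching attaining $\operatorname{opt}_{\mathrm{max\text{-}match}}(P)$). Then there exists a ball of radius $r/2$ that contains both endpoints $p,q$ of every pair $\{p,q\}\in M$ with $\|p-q\|\le r/4$.
   Context: Norms are Euclidean. A matching of $P$ is a matching in the complete graph on $P$, with weight $\sum_{\{p,q\}\in M}\|p-q\|$; $\operatorname{opt}_{\mathrm{max\text{-}match}}(P)$ is the maximum weight over all matchings of $P$. *)

(* Defs.v *)
From HB Require Import structures.
From mathcomp Require Import all_boot all_order all_algebra.
From mathcomp Require Import reals.
Set Implicit Arguments. Unset Strict Implicit. Unset Printing Implicit Defensive.
Import Order.TTheory GRing.Theory Num.Theory.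
Local Open Scope ring_scope.

Section Defs.
Variables (R : realType) (d : nat).
Notation pt := 'rV[R]_d.

Definition edist (x y : pt) : R := Num.sqrt (\sum_(i < d) (x 0 i - y 0 i) ^+ 2).

Definition in_ball (c : pt) (r : R) (x : pt) : Prop := edist c x <= r.

Definition is_meb_radius (P : seq pt) (r : R) : Prop :=
  [/\ 0 <= r,
      exists c : pt, forall p, p \in P -> in_ball c r p
    & forall (c : pt) (r' : R), 0 <= r' ->
        (forall p, p \in P -> in_ball c r' p) -> r <= r'].

(* A matching of P: a list of edges {p,q} (stored as pairs), p, q in P,
   p <> q, with all endpoints distinct (edges pairwise disjoint, no repeats). *)
Definition is_matching (P : seq pt) (M : seq (pt * pt)) : Prop :=
  all (fun e => [&& e.1 \in P, e.2 \in P & e.1 != e.2]) M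
  /\ uniq (flatten [seq [:: e.1; e.2] | e <- M]).

Definition match_weight (M : seq (pt * pt)) : R :=
  \sum_(e <- M) edist e.1 e.2.

Definition is_max_matching (P : seq pt) (M : seq (pt * pt)) : Prop :=
  is_matching P M /\
  forall M', is_matching P M' -> match_weight M' <= match_weight M.

End Defs.

(* Main.v *)
Require Import Defs.
From HB Require Import structures.
From mathcomp Require Import all_boot all_order all_algebra.
From mathcomp Require Import reals.
From mathcomp Require Import lra zify.
Import Order.TTheory GRing.Theory Num.Theory.
Local Open Scope ring_scope.

Lemma edist_ge0 (R : realType) (d : nat) (x y : 'rV[R]_d) : 0 <= edist x y.
Proof. exact: sqrtr_ge0. Qed.

Lemma edist_xx (R : realType) (d : nat) (x : 'rV[R]_d) : edist x x = 0.
Proof.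
rewrite /edist big1 ?sqrtr0 // => i _; by rewrite subrr expr0n.
Qed.

Lemma swap_ok (R : realType) (d : nat) (P : seq 'rV[R]_d)
  (M : seq ('rV[R]_d * 'rV[R]_d)) a b p q x y rest :
  perm_eq [:: x; y] [:: p; q] ->
  perm_eq M ((a,b)::(p,q)::rest) -> is_max_matching P M ->
  edist a x + edist b y <= edist a b + edist p q.
Proof.
move=> pxy pM [[hall huniq] hmax].
set M' := (a,x)::(b,y)::rest.
have hall' := hall; rewrite (perm_all _ pM) /= in hall'.
case/andP: hall' => /and3P[aP bP _] /andP[/and3P[pP qP _] hr].
have pF : perm_eq (flatten [seq [:: e.1; e.2] | e <- M])
                  (a :: b :: p :: q :: flatten [seq [:: e.1; e.2] | e <- rest]).
  exact: (perm_flatten (perm_map (fun e => [:: e.1; e.2]) pM)).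
have pF' : perm_eq (flatten [seq [:: e.1; e.2] | e <- M'])
                  (a :: b :: p :: q :: flatten [seq [:: e.1; e.2] | e <- rest]).
  apply/permP => f /=; move/permP: pxy => /(_ f) /= h; set X := count _ _; clear -h; lia.
have hu' : uniq (flatten [seq [:: e.1; e.2] | e <- M']).
  by rewrite (perm_uniq pF') -(perm_uniq pF).
have hm : is_matching P M'.
  have xP : x \in P by move/perm_mem: pxy => /(_ x); rewrite !inE eqxx /= => /esym/orP[]/eqP->.
  have yP : y \in P by move/perm_mem: pxy => /(_ y); rewrite !inE eqxx orbT /= => /esym/orP[]/eqP->.
  split=> //; rewrite /= aP xP bP yP hr /=.
  move: hu' => /= /andP[ha /andP[_ /andP[hb _]]].
  move: ha hb; rewrite !in_cons !negb_or => /andP[-> _] /andP[-> _] //.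
have := hmax _ hm; rewrite /match_weight (perm_big _ pM) /= !big_cons /=.
by rewrite !addrA lerD2r.
Qed.

Theorem mainTheorem3 (R : realType) (d : nat) (P : seq 'rV[R]_d) (r : R)
    (M : seq ('rV[R]_d * 'rV[R]_d)) :
  is_meb_radius P r ->
  is_max_matching P M ->
  exists c : 'rV[R]_d,
    forall e, e \in M -> edist e.1 e.2 <= r / 4 ->
      in_ball c (r / 2) e.1 /\ in_ball c (r / 2) e.2.
Proof.
move=> [r0 _ _] hM.
have r42 : r / 4 <= r / 2.
  by rewrite ler_pdivrMr // mulrAC ler_pdivlMr // ler_wpM2l // ler_nat.
have r2 : 0 <= r / 2 by rewrite divr_ge0.
case: (boolP (has (fun e => edist e.1 e.2 <= r / 4) M)) => [/hasP[[a b] e0M /= hab]|hn];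
  last first.
  exists 0 => e eM he; exfalso; move/hasPn: hn => /(_ e eM) /=.
  by rewrite he.
exists a => -[p q] eM /= hpq; rewrite /in_ball.
case: (eqVneq (p, q) (a, b)) => [[-> ->]|ne].
  by rewrite edist_xx r2; split=> //; apply: le_trans r42.
have pM : perm_eq M ((a,b) :: (p,q) :: rem (p,q) (rem (a,b) M)).
  apply: (perm_trans (perm_to_rem e0M)); rewrite perm_cons.
  by apply: perm_to_rem; apply: rem_mem.
have h1 := @swap_ok R d P M a b p q p q _ (perm_refl _) pM hM.
have h2 : edist a q + edist b p <= edist a b + edist p q.
  apply: (@swap_ok R d P M a b p q q p _ _ pM hM); apply/permP => f /=; clear; lia.
have ge0 := @edist_ge0 R d.
have := ge0 a p; have := ge0 b q; have := ge0 a q; have := ge0 b p.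
move: hab hpq h1 h2; set u := r / 4; have -> : r / 2 = u + u.
  by rewrite /u; lra.
move=> *; split; lra.
Qed.
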